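(* Let $S$ be a nonempty complete lattice and let $F:S\to 2^S$ be a V-ascending correspondence. Suppose that for every $x\in S$, the value $F(x)$, with the order induced from $S$, is a nonempty complete lattice. Then $\mathrm{Fix}(F)=\{s\in S: s\in F(s)\}$, with the order induced from $S$, is a nonempty complete lattice.
   Context: A poset $P$ is a complete lattice if every nonempty subset of $P$ has a supremum and an infimum in $P$ (this is an intrinsic property of $P$; for $F(x)$ the suprema/infima are taken within $F(x)$, not necessarily agreeing with those in $S$). For a lattice $S$ and a correspondence $F:S\to 2^S$: $F$ is lower V-ascending if for all $x<x'$ in $S$ (strict inequality), every $y\in F(x)$ and every $y'\in F(x')$, one has $y\wedge y'\in F(x)$; $F$ is upper V-ascending if under the same conditions $y\vee y'\in F(x')$; $F$ is V-ascending if it is both upper and lower V-ascending. *)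

(* Defs.v *)
From mathcomp Require Import all_boot all_order.
Set Implicit Arguments. Unset Strict Implicit. Unset Printing Implicit Defensive.
Import Order.Theory.
Local Open Scope order_scope.

Section Defs.
Context {d : Order.disp_t} {T : latticeType d}.

Definition is_sup_in (A B : T -> Prop) (s : T) : Prop :=
  A s /\ (forall b, B b -> b <= s) /\
  (forall u, A u -> (forall b, B b -> b <= u) -> s <= u).

Definition is_inf_in (A B : T -> Prop) (s : T) : Prop :=
  A s /\ (forall b, B b -> s <= b) /\
  (forall u, A u -> (forall b, B b -> u <= b) -> u <= s).

Definition complete_lattice_in (A : T -> Prop) : Prop :=
  forall B : T -> Prop, (exists b, B b) -> (forall b, B b -> A b) ->
    (exists s, is_sup_in A B s) /\ (exists s, is_inf_in A B s).

Definition nonempty_complete_lattice_in (A : T -> Prop) : Prop :=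
  (exists a, A a) /\ complete_lattice_in A.

Definition lower_V_ascending (F : T -> T -> Prop) : Prop :=
  forall x x', x < x' -> forall y y', F x y -> F x' y' -> F x (y `&` y').

Definition upper_V_ascending (F : T -> T -> Prop) : Prop :=
  forall x x', x < x' -> forall y y', F x y -> F x' y' -> F x' (y `|` y').

Definition V_ascending (F : T -> T -> Prop) : Prop :=
  upper_V_ascending F /\ lower_V_ascending F.

Definition Fix (F : T -> T -> Prop) : T -> Prop := fun s => F s s.

End Defs.

(* Main.v *)
Require Import Defs.
From mathcomp Require Import all_boot all_order.
Import Order.Theory.
Local Open Scope order_scope.

Lemma core_lfp d (T : latticeType d) (P : T -> Prop) (G : T -> T -> Prop) t :
  P t -> (forall x, P x -> x <= t) ->
  (forall D : T -> Prop, (exists b, D b) -> (forall b, D b -> P b) ->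
      exists s, is_inf_in P D s) ->
  (forall x, P x -> exists y, G x y) ->
  (forall x y, P x -> G x y -> P y) ->
  (forall x, P x -> exists z, G x z /\ forall y, G x y -> z <= y) ->
  (forall x x', P x -> P x' -> x < x' -> forall y y', G x y -> G x' y' ->
      G x (y `&` y')) ->
  exists s, P s /\ G s s /\ forall p, P p -> G p p -> s <= p.
Proof.
move=> Pt tmax infs Gne GP Gleast lowV.
pose C := fun x => P x /\ exists y, G x y /\ y <= x.
have neC : exists x, C x.
  have [y Gy] := Gne t Pt.
  by exists t; split=> //; exists y; split=> //; apply: tmax; apply: GP Gy.
have [xs [Pxs [lb glb]]] := infs C neC (fun b h => proj1 h).
have [z [Gz zl]] := Gleast xs Pxs.
have Pz : P z by apply: GP Gz.
have zC : forall x, C x -> z <= x.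
  move=> x Cx; have xsx := lb x Cx; case: Cx => Px [y [Gy yx]].
  move: xsx; rewrite le_eqVlt => /orP [/eqP E|lt].
    by subst x; apply: le_trans (zl _ Gy) yx.
  have Gm := lowV _ _ Pxs Px lt _ _ Gz Gy.
  apply: le_trans (zl _ Gm) _; exact: le_trans (leIr _ _) yx.
have zxs : z <= xs := glb z Pz zC.
have Cz : C z.
  split=> //.
  move: zxs; rewrite le_eqVlt => /orP [/eqP E|lt].
    by exists z; split=> //; rewrite {1}E.
  have [w Gw] := Gne z Pz.
  exists (w `&` z); split; last exact: leIr.
  exact: lowV _ _ Pz Pxs lt _ _ Gw Gz.
have E : z = xs by apply: le_anti; rewrite zxs (lb z Cz).
exists xs; split=> //; split; first by rewrite -{2}E.
move=> p Pp Gp; apply: lb; split=> //; exists p; split=> //.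
Qed.

Lemma sup_part d (S : latticeType d) (F : S -> S -> Prop) :
  (exists a : S, True) -> complete_lattice_in (fun _ : S => True) ->
  upper_V_ascending F -> lower_V_ascending F ->
  (forall x, complete_lattice_in (F x)) -> (forall x, exists y, F x y) ->
  forall B, (exists b, B b) -> (forall b, B b -> Fix F b) ->
  exists s, is_sup_in (Fix F) B s.
Proof.
move=> [a _] hS upV lowV hF Fne B neB BF.
have [[t [_ [tub _]]] _] := hS (fun _ => True) (ex_intro _ a I) (fun _ _ => I).
pose U := fun x => forall b, B b -> b <= x.
have key : forall x y, U x -> F x y -> exists s, F x s /\ U s /\ y <= s /\
    (forall dd, F x dd -> U dd -> y <= dd -> s <= dd).
  move=> x y Ux Fy.
  pose E := fun v => v = y \/ (exists b, B b /\ b < x /\ v = b `|` y) \/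
                     (B x /\ v = x).
  have EF : forall v, E v -> F x v.
    move=> v [->|[[b [Bb [bx ->]]]|[Bx ->]]] //.
      exact: upV bx _ _ (BF b Bb) Fy.
    exact: BF.
  have [[s [Fs [ub lub]]] _] := hF x E (ex_intro _ y (or_introl erefl)) EF.
  exists s; split=> //; split; last split.
  - move=> b Bb; have bx := Ux b Bb.
    move: bx; rewrite le_eqVlt => /orP [/eqP E'|lt].
      by subst b; apply: ub; right; right.
    apply: le_trans (leUl b y) _; apply: ub; right; left; by exists b.
  - by apply: ub; left.
  - move=> dd Fdd Udd ydd; apply: lub => // v [->|[[b [Bb [_ ->]]]|[Bx ->]]] //.
      by rewrite leUx (Udd b Bb) ydd.
    exact: Udd.
pose G := fun x y => F x y /\ U y.
have Gne : forall x, U x -> exists y, G x y.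
  move=> x Ux; have [y Fy] := Fne x.
  by have [s [Fs [Us _]]] := key x y Ux Fy; exists s.
have [s [Us [[Fs _] least]]] :
    exists s, U s /\ G s s /\ forall p, U p -> G p p -> s <= p.
  apply: (@core_lfp _ S U G t (fun b _ => tub b I) (fun x _ => tub x I)).
  - move=> D [b0 Db0] DU.
    have [_ [i [_ [lbi glbi]]]] := hS D (ex_intro _ b0 Db0) (fun _ _ => I).
    exists i; split; last split=> //.
      by move=> b Bb; apply: glbi => // dd Ddd; apply: DU.
    by move=> u _ h; apply: glbi.
  - exact: Gne.
  - by move=> x y _ [].
  - move=> x Ux.
    have [[y0 Gy0] ] := (Gne x Ux, I).
    have [_ [e [Fe [lbe glbe]]]] := hF x (G x) (ex_intro _ y0 Gy0) (fun _ h => proj1 h).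
    have [s [Fs [Us [es lub]]]] := key x e Ux Fe.
    have se : s <= e.
      by apply: glbe => // dd [Fdd Udd]; apply: lub => //; apply: lbe.
    exists e; split; last by move=> y Gy; apply: lbe.
    split=> //; move=> b1 Bb1; exact: le_trans (Us b1 Bb1) se.
  - move=> x x' _ _ lt y y' [Fy Uy] [Fy' Uy']; split; first exact: lowV lt _ _ Fy Fy'.
    by move=> b Bb; rewrite lexI Uy // Uy'.
exists s; split=> //; split=> // u Fu Uu; exact: least u Uu (conj Fu Uu).
Qed.

(* F : S -> 2^S is encoded as F x y <-> y \in F(x). *)
Theorem theorem1p3 (d : Order.disp_t) (S : latticeType d)
    (F : S -> S -> Prop) :
  nonempty_complete_lattice_in (fun _ : S => True) ->
  V_ascending F ->
  (forall x : S, nonempty_complete_lattice_in (F x)) ->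
  nonempty_complete_lattice_in (Fix F).
Proof.
move=> [[a _] hS] [upV lowV] hFx.
have hF : forall x, complete_lattice_in (F x) by move=> x; case: (hFx x).
have Fne : forall x, exists y, F x y by move=> x; case: (hFx x).
split.
  have [[t [_ [tub _]]] _] := hS (fun _ => True) (ex_intro _ a I) (fun _ _ => I).
  have [s [_ [Fs _]]] :
      exists s, True /\ F s s /\ forall p, True -> F p p -> s <= p.
    apply: (@core_lfp _ S (fun _ => True) F t I (fun x _ => tub x I)).
    - move=> D [b Db] _; have [_ [i hi]] := hS D (ex_intro _ b Db) (fun _ _ => I).
      by exists i.
    - by move=> x _; apply: Fne.
    - by [].
    - move=> x _; have [y Fy] := Fne x.
      have [_ [e [Fe [lbe _]]]] := hF x (F x) (ex_intro _ y Fy) (fun _ h => h).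
      by exists e.
    - by move=> x x' _ _ lt; apply: lowV.
  by exists s.
move=> B neB BF; split.
  exact: sup_part (ex_intro _ a I) hS upV lowV hF Fne B neB BF.
have := @sup_part _ (S^d) F (ex_intro _ a I).
apply.
- move=> B' ne sub; have [[s1 h1] [s2 h2]] := hS B' ne sub.
  by split; [exists s2 | exists s1].
- move=> x x' lt y y' Fy Fy'.
  have lt' : (x' : S) < x by exact: lt.
  have := lowV x' x lt' y' y Fy' Fy; rewrite meetC => h; exact: h.
- move=> x x' lt y y' Fy Fy'.
  have lt' : (x' : S) < x by exact: lt.
  have := upV x' x lt' y' y Fy' Fy; rewrite joinC => h; exact: h.
- move=> x B' ne sub; have [[s1 h1] [s2 h2]] := hF x B' ne sub.
  by split; [exists s2 | exists s1].
- exact: Fne.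
- exact: neB.
- exact: BF.
Qed.
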